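(* Let $D\ge 1$. If there is a $\bar{D}$-separable block design (multiset) $\mathcal{F}$ with $N$ blocks on vertex set $[T]$, then there exists a $(T,N,D)$-tropical code within maximum delay $0$; namely, with a bijection $j:\mathcal{F}\to[N]$, the matrix $S_{t,j(B)}=0$ if $t\in B$ and $S_{t,j(B)}=\infty$ if $t\notin B$ is such a code.
   Context: Tropical arithmetic on $\mathbb{R}\cup\{\infty\}$: $x\oplus y=\min(x,y)$, $x\odot y=x+y$, with $x\oplus\infty=x$ and $x\odot\infty=\infty$. For a matrix $S$ with $T$ rows and $N$ columns and a column vector $\mathbf{x}$ of length $N$, $S\odot\mathbf{x}$ is the vector whose $t$-th entry is $\min_{j}(S_{tj}+x_j)$. A $(T,N,D)$-tropical code is a matrix $S\in(\{0\}\cup\mathbb{N}\cup\{\infty\})^{T\times N}$ such that for any two distinct vectors $\mathbf{x},\mathbf{y}\in(\{0\}\cup\mathbb{N}\cup\{\infty\})^{N}$, each having at most $D$ finite entries, $S\odot\mathbf{x}\ne S\odot\mathbf{y}$. It is within maximum delay $\ell$ if $S\in\{0,1,\dots,\ell,\infty\}^{T\times N}$. A block design here is a multiset $\mathcal{F}$ of subsets of $[T]$ whose elements (blocks) are individually indexed; it is $\bar{D}$-separable if for any two different subcollections $\{Z_1,\dots,Z_r\}\ne\{B_1,\dots,B_s\}$ of at most $D$ blocks each (different as collections of indexed blocks, $r,s\le D$), $Z_1\cup\dots\cup Z_r\ne B_1\cup\dots\cup B_s$. *)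

(* Defs.v *)
From mathcomp Require Import all_boot.
Set Implicit Arguments. Unset Strict Implicit. Unset Printing Implicit Defensive.

(* Tropical semiring on {0} ∪ N ∪ {∞}: [Some n] = n, [None] = ∞. *)
Definition trop := option nat.

Definition tplus (x y : trop) : trop :=
  match x, y with
  | None, _ => y
  | _, None => x
  | Some a, Some b => Some (minn a b)
  end.

Definition ttimes (x y : trop) : trop :=
  match x, y with
  | Some a, Some b => Some (a + b)
  | _, _ => None
  end.

Definition tmatvec (T N : nat) (S : 'I_T -> 'I_N -> trop)
  (x : {ffun 'I_N -> trop}) : {ffun 'I_T -> trop} :=
  [ffun t => \big[tplus/None]_(j < N) ttimes (S t j) (x j)].

Definition at_most_finite (N D : nat) (x : {ffun 'I_N -> trop}) : Prop :=
  #|[set j | x j != None]| <= D.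

Definition tropical_code (T N D : nat) (S : 'I_T -> 'I_N -> trop) : Prop :=
  forall x y : {ffun 'I_N -> trop},
    at_most_finite D x -> at_most_finite D y -> x <> y ->
    tmatvec S x <> tmatvec S y.

Definition within_delay (T N l : nat) (S : 'I_T -> 'I_N -> trop) : Prop :=
  forall t j, match S t j with Some k => k <= l | None => true end.

(* A block design with N individually indexed blocks on [T]: block i is F i.
   D-bar-separable: distinct subcollections (sets of block indices) of size
   at most D have distinct unions. *)
Definition separable (T N D : nat) (F : 'I_N -> {set 'I_T}) : Prop :=
  forall A B : {set 'I_N}, #|A| <= D -> #|B| <= D -> A != B ->
    \bigcup_(i in A) F i != \bigcup_(i in B) F i.

Definition design_matrix (T N : nat) (F : 'I_N -> {set 'I_T}) :
  'I_T -> 'I_N -> trop :=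
  fun t j => if t \in F j then Some 0 else None.

(* Main.v *)
Require Import Defs.
From mathcomp Require Import all_boot.

Definition lev (o : trop) (v : nat) : bool :=
  match o with Some a => a <= v | None => false end.

Lemma lev_plus a b v : lev (tplus a b) v = lev a v || lev b v.
Proof.
case: a => [a|] //=; case: b => [b|] //=; last by rewrite orbF.
by rewrite geq_min.
Qed.

Lemma lev_out (T N : nat) (F : 'I_N -> {set 'I_T}) (x : {ffun 'I_N -> trop}) t v :
  lev (tmatvec (design_matrix F) x t) v = [exists j, (t \in F j) && lev (x j) v].
Proof.
rewrite /tmatvec ffunE.
rewrite (@big_morph _ _ (fun o => lev o v) false orb None tplus (fun a b => lev_plus a b v) (erefl false)).
rewrite big_orE; apply: eq_existsb => j /=.
rewrite /design_matrix; case: (t \in F j); case: (x j) => //.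
Qed.

Lemma union_eq (T N : nat) (F : 'I_N -> {set 'I_T}) (x : {ffun 'I_N -> trop}) v :
  \bigcup_(i in [set i | lev (x i) v]) F i =
  [set t | lev (tmatvec (design_matrix F) x t) v].
Proof.
apply/setP => t; rewrite inE lev_out.
apply/bigcupP/existsP => [[i]|[i /andP[H1 H2]]].
  by rewrite inE => H2 H1; exists i; rewrite H1.
by exists i; rewrite ?inE.
Qed.

Lemma card_lev (N D : nat) (x : {ffun 'I_N -> trop}) v :
  at_most_finite D x -> #|[set i | lev (x i) v]| <= D.
Proof.
move=> H; apply: leq_trans H; apply: subset_leq_card.
apply/subsetP => i; rewrite !inE; by case: (x i).
Qed.

Theorem mainTheorem11 (T N D : nat) (F : 'I_N -> {set 'I_T}) :
  1 <= D -> separable D F ->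
  tropical_code D (design_matrix F) /\ within_delay 0 (design_matrix F).
Proof.
move=> _ Hsep; split; last first.
  by move=> t j; rewrite /design_matrix; case: (t \in F j).
move=> x y Hx Hy Hne Heq; apply: Hne.
have E : forall v, [set i | lev (x i) v] = [set i | lev (y i) v].
  move=> v; apply/eqP; apply/negPn/negP => Hn.
  move: (Hsep _ _ (@card_lev _ _ x v Hx) (@card_lev _ _ y v Hy) Hn).
  by rewrite !union_eq Heq eqxx.
have E' : forall i v, lev (x i) v = lev (y i) v.
  by move=> i v; move/setP: (E v) => /(_ i); rewrite !inE.
apply/ffunP => i.
case Hxi: (x i) => [a|]; case Hyi: (y i) => [b|] //.
- move: (E' i a) (E' i b); rewrite Hxi Hyi /= !leqnn => H1 H2.
  by have/eqP-> : a == b by rewrite eqn_leq -H1 H2.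
- by move: (E' i a); rewrite Hxi Hyi /= leqnn.
- by move: (E' i b); rewrite Hxi Hyi /= leqnn.
Qed.
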